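(* Consider the causal adversarial multi-path network model described in the context, with $C$ links of unit capacity, overwrite jamming, no feedback and no secrecy requirement. For any adversary vector $\vec z=(z_{rw},z_{ro},z_{wo})$ with $z_{rw}+z_{ro}+z_{wo}\le C$, the capacity is $$R^{ow}_j(C,\vec z)=\begin{cases} C-(z_{rw}+z_{wo}) & \text{if } 2z_{wo}+2z_{rw}<C,\\ 0 & \text{otherwise.}\end{cases}$$
   Context: Model. A sender (Alice) communicates with a receiver (Bob) over $C$ parallel directed noiseless links $L_1,\dots,L_C$; in the equal-capacity case each link has unit capacity: over a block of $n$ time slots each link carries a length-$n$ word (one unit of information per time slot; the links are taken in the large-alphabet regime, i.e. symbols may be grouped into elements of finite fields $\mathbb F_{2^b}$ with $b$ growing with $n$). A code of block length $n$ and rate $R$ has message $M$ uniform on $\{0,1\}^{nR}$; the encoder is stochastic, using private randomness of Alice unknown to the adversary, and maps the message and randomness to codewords $\vec X_1,\dots,\vec X_C$ (row $i$ sent on $L_i$). The decoder maps the received words $\vec Y_1,\dots,\vec Y_C$ to an estimate $\hat M$. Adversary. An adversary (Calvin), who knows the encoder and decoder, selects pairwise disjoint link sets $Z_{rw},Z_{ro},Z_{wo}$ (unknown to Alice and Bob) with $|Z_{rw}|\le z_{rw}$, $|Z_{ro}|\le z_{ro}$, $|Z_{wo}|\le z_{wo}$; he can read (eavesdrop) the links in $Z_r=Z_{rw}\cup Z_{ro}$ and write (jam) the links in $Z_w=Z_{rw}\cup Z_{wo}$. Write $z_r=z_{rw}+z_{ro}$, $z_w=z_{rw}+z_{wo}$,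 $\vec z=(z_{rw},z_{ro},z_{wo})$. The adversary is causal: at each time $t$ his jamming of the $t$-th symbols of links in $Z_w$ may depend only on the first $t$ symbols observed on the links in $Z_r$ (and his own randomness). Under additive jamming, the received word on link $i$ is $\vec Y_i=\vec X_i+\vec E_i$ where $\vec E_i$ is chosen by Calvin and $\vec E_i=0$ for $i\notin Z_w$. Under overwrite jamming, $\vec Y_i=\vec E_i$ for $i\in Z_w$ (Calvin replaces the symbols by his own) and $\vec Y_i=\vec X_i$ otherwise. Reliability and capacity. Rate $R$ is achievable if for every $\varepsilon>0$ and all sufficiently large $n$ there is a code of block length $n$ and rate $R$ with $\Pr[\hat M\neq M]<\varepsilon$ against every admissible causal adversary strategy; the capacity is the supremum of achievable rates. (Without feedback, the encoder's output depends only on the message and Alice's randomness.) *)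

(* Defs.v *)
From mathcomp Require Import all_boot.
From Stdlib Require Import Reals.

Set Implicit Arguments.
Unset Strict Implicit.
Unset Printing Implicit Defensive.

(* A symbol sent in one time slot on one link: an element of {0,1}^b
   (i.e. of F_{2^b}); one symbol = one unit of information. *)
(* A "channel word": row i (link L_i), column t (time slot t). *)
Definition cword (C n b : nat) := {ffun 'I_C -> {ffun 'I_n -> b.-tuple bool}}.

Definition rsum (T : finType) (F : T -> R) : R := \big[Rplus/0%R]_(t : T) F t.

Definition is_dist (T : finType) (p : T -> R) : Prop :=
  (forall t, (0 <= p t)%R) /\ rsum p = 1%R.

(* A code of block length n, symbol width b, with k message bits.
   The encoder is stochastic via Alice's private randomness rA ~ pA;
   without feedback the whole codeword is a function of (message, randomness). *)
Record code (C n b k : nat) := Code {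
  rA : finType;
  pA : rA -> R;
  enc : k.-tuple bool -> rA -> cword C n b;
  dec : cword C n b -> k.-tuple bool }.

(* An adversary strategy: the link sets, his own randomness rC ~ pC, and the
   symbol jam r i t X he writes on link i at time t, given (a priori) the
   whole transmitted word X; causality is imposed separately. *)
Record adversary (C n b : nat) := Adversary {
  Zrw : {set 'I_C};
  Zro : {set 'I_C};
  Zwo : {set 'I_C};
  rC : finType;
  pC : rC -> R;
  jam : rC -> 'I_C -> 'I_n -> cword C n b -> b.-tuple bool }.

Arguments jam {C n b} a _ _ _ _.
Arguments pC {C n b} a _.
Arguments pA {C n b k} c _.
Arguments enc {C n b k} c _ _.
Arguments dec {C n b k} c _.

Definition Zr C n b (a : adversary C n b) := Zrw a :|: Zro a.
Definition Zw C n b (a : adversary C n b) := Zrw a :|: Zwo a.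

Definition causal C n b (a : adversary C n b) : Prop :=
  forall (r : rC a) (i : 'I_C) (t : 'I_n) (X X' : cword C n b),
    (forall (j : 'I_C) (s : 'I_n), j \in Zr a -> (s <= t)%N -> X j s = X' j s) ->
    jam a r i t X = jam a r i t X'.

Definition admissible (zrw zro zwo : nat) C n b (a : adversary C n b) : Prop :=
  [disjoint Zrw a & Zro a] /\ [disjoint Zrw a & Zwo a] /\
  [disjoint Zro a & Zwo a] /\
  (#|Zrw a| <= zrw)%N /\ (#|Zro a| <= zro)%N /\ (#|Zwo a| <= zwo)%N /\
  is_dist (pC a) /\ causal a.

Definition received_ow C n b (a : adversary C n b) (r : rC a) (X : cword C n b)
  : cword C n b :=
  [ffun i => [ffun t => if i \in Zw a then jam a r i t X else X i t]].

Definition perr_ow C n b k (c : code C n b k) (a : adversary C n b) : R :=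
  rsum (fun m : k.-tuple bool =>
    (/ INR (expn 2 k) *
     rsum (fun x : rA c => pA c x *
       rsum (fun r : rC a => pC a r *
         (if dec c (received_ow r (enc c m x)) == m then 0 else 1))))%R).

(* rate Rt (units of information per time slot per ... i.e. symbols per slot)
   is achievable: for every eps > 0 and all large n there is a symbol width
   b >= 1 and a code with floor(n*b*Rt) message bits (i.e. rate Rt) whose error
   probability is below eps against every admissible causal adversary. *)
Definition achievable_ow (C zrw zro zwo : nat) (Rt : R) : Prop :=
  forall eps : R, (0 < eps)%R ->
  exists N : nat, forall n : nat, (N <= n)%N ->
  exists (b k : nat) (c : code C n b k),
    (0 < b)%N /\
    (INR k <= INR n * INR b * Rt < INR k + 1)%R /\
    is_dist (pA c) /\
    (forall a : adversary C n b, admissible zrw zro zwo a ->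
       (perr_ow c a < eps)%R).

Definition capacity_ow_is (C zrw zro zwo : nat) (v : R) : Prop :=
  is_lub (achievable_ow C zrw zro zwo) v.

(* Main.v *)
Require Import Defs.
From HB Require Import structures.
From mathcomp Require Import all_boot all_algebra all_field.
From Stdlib Require Import Reals Lra Lia.
From Stdlib Require ZArith.
From mathcomp Require Import zify.
Set Implicit Arguments. Unset Strict Implicit. Unset Printing Implicit Defensive.

Open Scope R_scope.


HB.instance Definition _ := Monoid.isComLaw.Build R R0 Rplus (fun x y z => esym (Rplus_assoc x y z)) Rplus_comm Rplus_0_l.


Lemma rsum_le (T : finType) (F G : T -> R) : (forall t, F t <= G t) -> rsum F <= rsum G.
Proof. move=> H; rewrite /rsum; elim/big_ind2: _ => //; [lra| move=> *; lra]. Qed.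

Lemma rsum_ge0 (T : finType) (F : T -> R) : (forall t, 0 <= F t) -> 0 <= rsum F.
Proof. move=> H; rewrite /rsum; elim/big_ind: _ => //; [lra| move=> *; lra]. Qed.

Lemma rsum_scal (T : finType) (c : R) (F : T -> R) : rsum (fun t => c * F t) = c * rsum F.
Proof. rewrite /rsum; elim/big_ind2: _ => //; [ring| move=> x1 x2 y1 y2 -> ->; ring]. Qed.

Lemma rsum_add (T : finType) (F G : T -> R) : rsum (fun t => F t + G t) = rsum F + rsum G.
Proof. by rewrite /rsum big_split. Qed.

Lemma rsum_opp (T : finType) (F : T -> R) : rsum (fun t => - F t) = - rsum F.
Proof. rewrite /rsum; elim/big_ind2: _ => //; [ring| move=> x1 x2 y1 y2 -> ->; ring]. Qed.

Lemma rsum_ext (T : finType) (F G : T -> R) : (forall t, F t = G t) -> rsum F = rsum G.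
Proof. by move=> H; rewrite /rsum; apply: eq_bigr. Qed.

Lemma rsum_exch (T U : finType) (F : T -> U -> R) :
  rsum (fun t => rsum (fun u => F t u)) = rsum (fun u => rsum (fun t => F t u)).
Proof. by rewrite /rsum exchange_big. Qed.

Lemma rsum_pair (T U : finType) (F : T * U -> R) :
  rsum F = rsum (fun t => rsum (fun u => F (t, u))).
Proof. by rewrite /rsum pair_big /=; apply: eq_bigr => -[]. Qed.

Lemma rsum_count (T : finType) (P : pred T) :
  rsum (fun t => if P t then 1 else 0) = INR #|P|.
Proof.
rewrite /rsum -big_mkcond /= -sum1_card.
elim/big_ind2: _ => //; first by move=> x1 x2 y1 y2 -> ->; rewrite plus_INR.
Qed.

Lemma rsum_const (T : finType) (c : R) : rsum (fun _ : T => c) = INR #|T| * c.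
Proof.
rewrite -(rsum_count (@predT T)) Rmult_comm -rsum_scal; apply: rsum_ext => t /=; ring.
Qed.

Lemma rsum_term (T : finType) (F : T -> R) (t0 : T) :
  (forall t, 0 <= F t) -> F t0 <= rsum F.
Proof.
move=> H; rewrite /rsum (bigD1 t0) //=.
have : 0 <= \big[Rplus/0]_(i | i != t0) F i by elim/big_ind: _ => //; [lra|move=>*;lra].
lra.
Qed.

Definition code0 C n : code C n 1 0 :=
  @Code C n 1 0 unit (fun _ => 1) (fun _ _ => [ffun _ => [ffun _ => [tuple false]]])
     (fun _ => [tuple]).

Lemma ach0 (C zrw zro zwo : nat) : achievable_ow C zrw zro zwo 0.
Proof.
move=> eps he; exists 0%nat => n _.
exists 1%nat, 0%nat, (code0 C n); split => //; split; [simpl; lra|split].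
  split => [t|]; rewrite /=; first lra.
  by rewrite rsum_const /= card_unit /=; lra.
move=> a _; rewrite /perr_ow.
rewrite (@rsum_ext _ _ (fun _ => 0)) ?rsum_const; first lra.
move=> m; rewrite (@rsum_ext _ _ (fun _ => 0)) ?rsum_const; first lra.
move=> x; rewrite (@rsum_ext _ _ (fun _ => 0)) ?rsum_const; first lra.
move=> r; rewrite (tuple0 m) /=.
lra.
Qed.

Definition ival (C a b : nat) : {set 'I_C} := [set i : 'I_C | (a <= i < b)%nat].

Lemma card_ival C a b : (#|ival C a b| <= b - a)%nat.
Proof.
rewrite cardE -(size_map val) -[(b - a)%nat](size_iota a).
apply: uniq_leq_size; first by rewrite map_inj_uniq ?enum_uniq //; apply: val_inj.
move=> x /mapP [i]; rewrite mem_enum inE => /andP [h1 h2] ->.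
rewrite mem_iota; apply/andP; split => //.
move: h1 h2 => /=; lia.
Qed.

Lemma disj_ival C a b c d : (b <= c)%nat -> [disjoint ival C a b & ival C c d].
Proof. by move=> h; rewrite disjoints_subset; apply/subsetP => i; rewrite !inE; lia. Qed.

Lemma disj_ival' C a b c d : (d <= a)%nat -> [disjoint ival C a b & ival C c d].
Proof. by move=> h; rewrite disjoints_subset; apply/subsetP => i; rewrite !inE; lia. Qed.

Lemma disj0r (C : nat) (A : {set 'I_C}) : [disjoint A & set0].
Proof. by rewrite disjoints_subset; apply/subsetP => i; rewrite !inE. Qed.
Lemma disj0l (C : nat) (A : {set 'I_C}) : [disjoint set0 & A].
Proof. by rewrite disjoints_subset; apply/subsetP => i; rewrite !inE. Qed.

Lemma card_tup k : #|{: k.-tuple bool}| = expn 2 k.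
Proof. by rewrite card_tuple card_bool. Qed.

Lemma INR2k_pos k : 0 < INR (expn 2 k).
Proof. apply: lt_0_INR; apply/ltP; by rewrite expn_gt0. Qed.

Section Sym.
Variables (C n b k : nat) (c : code C n b k) (hA : is_dist (pA c)).

Definition symadv (Z1 Z2 : {set 'I_C}) : adversary C n b :=
  @Adversary C n b Z1 set0 Z2 (k.-tuple bool * rA c)%type
    (fun p => / INR (expn 2 k) * pA c p.2) (fun p i t _ => enc c p.1 p.2 i t).

Lemma symadv_causal Z1 Z2 : causal (symadv Z1 Z2).
Proof. by []. Qed.

Lemma symadv_dist Z1 Z2 : is_dist (pC (symadv Z1 Z2)).
Proof.
case: hA => h0 h1; split.
  move=> [m x] /=; have := INR2k_pos k; have := h0 x => *.
  apply: Rmult_le_pos => //; apply: Rlt_le; apply: Rinv_0_lt_compat; lra.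
rewrite rsum_pair /= (@rsum_ext _ _ (fun _ => / INR (expn 2 k))).
  rewrite rsum_const card_tup; have := INR2k_pos k => ?; field; lra.
by move=> m; rewrite rsum_scal h1; ring.
Qed.

Lemma Rsum_pA : rsum (pA c) = 1. Proof. by case: hA. Qed.

Definition Qf (f : k.-tuple bool -> rA c -> k.-tuple bool -> rA c -> R) : R :=
  rsum (fun m => rsum (fun m' => rsum (fun x => rsum (fun x' =>
     (/ INR (expn 2 k) * pA c x) * (/ INR (expn 2 k) * pA c x') * f m x m' x')))).

Lemma Qf_le f g : (forall m x m' x', f m x m' x' <= g m x m' x') -> Qf f <= Qf g.
Proof.
case: hA => h0 _.
have := INR2k_pos k => hk.
have hi : 0 <= / INR (expn 2 k) by apply: Rlt_le; apply: Rinv_0_lt_compat.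
move=> H; do 4 (apply: rsum_le => ?); apply: Rmult_le_compat_l => //.
by apply: Rmult_le_pos; apply: Rmult_le_pos.
Qed.

Lemma Qf_add f g : Qf (fun m x m' x' => f m x m' x' + g m x m' x') = Qf f + Qf g.
Proof.
rewrite /Qf -rsum_add; apply: rsum_ext => m; rewrite -rsum_add; apply: rsum_ext => m'.
rewrite -rsum_add; apply: rsum_ext => x; rewrite -rsum_add; apply: rsum_ext => x'; ring.
Qed.

Lemma Qf_mm (g : k.-tuple bool -> k.-tuple bool -> R) :
  Qf (fun m _ m' _ => g m m') = rsum (fun m => rsum (fun m' => / INR (expn 2 k) * / INR (expn 2 k) * g m m')).
Proof.
apply: rsum_ext => m; apply: rsum_ext => m'.
rewrite (@rsum_ext _ _ (fun x => (/ INR (expn 2 k) * / INR (expn 2 k) * g m m') * pA c x)).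
  by rewrite rsum_scal Rsum_pA; ring.
move=> x.
rewrite (@rsum_ext _ _ (fun x' => (/ INR (expn 2 k) * pA c x * / INR (expn 2 k) * g m m') * pA c x')).
  by rewrite rsum_scal Rsum_pA; ring.
move=> x'; ring.
Qed.

Lemma Qf_swap f : Qf f = Qf (fun m x m' x' => f m' x' m x).
Proof.
rewrite /Qf rsum_exch; apply: rsum_ext => m; apply: rsum_ext => m'.
rewrite rsum_exch; apply: rsum_ext => x; apply: rsum_ext => x'; ring.
Qed.

Definition errv (y m : k.-tuple bool) : R := if y == m then 0 else 1.

Definition Wsym Z1 Z2 m x m' x' := received_ow (a := symadv Z1 Z2) (m', x') (enc c m x).

Lemma perr_sym Z1 Z2 :
  perr_ow c (symadv Z1 Z2) = Qf (fun m x m' x' => errv (dec c (Wsym Z1 Z2 m x m' x')) m).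
Proof.
rewrite /perr_ow /Qf; apply: rsum_ext => m.
rewrite -rsum_scal -rsum_exch; apply: rsum_ext => x.
rewrite rsum_pair -rsum_scal -rsum_scal; apply: rsum_ext => m'.
rewrite -!rsum_scal; apply: rsum_ext => x' /=.
rewrite /errv /Wsym; case: (_ == m); ring.
Qed.

Lemma Wsym_eq Z1 Z2 Z1' Z2' m x m' x' :
  (forall i, (i \in Z1' :|: Z2') = ~~ (i \in Z1 :|: Z2)) ->
  Wsym Z1 Z2 m x m' x' = Wsym Z1' Z2' m' x' m x.
Proof.
move=> H; apply/ffunP => i; apply/ffunP => t; rewrite /Wsym /received_ow /Zw /= !ffunE H.
by case: (i \in Z1 :|: Z2).
Qed.

Lemma sym_sum Z1 Z2 Z1' Z2' :
  (forall i, (i \in Z1' :|: Z2') = ~~ (i \in Z1 :|: Z2)) ->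
  1 - / INR (expn 2 k) <= perr_ow c (symadv Z1 Z2) + perr_ow c (symadv Z1' Z2').
Proof.
move=> H; rewrite !perr_sym [X in _ + X]Qf_swap -Qf_add.
have -> : 1 - / INR (expn 2 k) = Qf (fun m _ m' _ => 1 - (if m' == m then 1 else 0)).
  rewrite Qf_mm.
  rewrite (@rsum_ext _ _ (fun m => / INR (expn 2 k) * / INR (expn 2 k) * (INR (expn 2 k) - 1))).
    rewrite rsum_const card_tup; have := INR2k_pos k => ?; field; lra.
  move=> m; rewrite rsum_scal rsum_add rsum_opp rsum_const rsum_count card_tup.
  by rewrite (_ : #|_| = 1%nat) ?card1 //=; ring.
apply: Qf_le => m x m' x'; rewrite -(Wsym_eq m x m' x' H) /errv.
set y := dec c _.
case E1: (y == m); case E2: (y == m'); case E3: (m' == m); try lra.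
by move/eqP: E1 E2 E3 => -> /eqP ->; rewrite eqxx.
Qed.

End Sym.

Lemma conv_b (C zrw zro zwo : nat) (Rt : R) :
  (C <= 2*zwo+2*zrw)%nat -> achievable_ow C zrw zro zwo Rt -> Rt <= 0.
Proof.
move=> hC ach; destruct (Rle_lt_dec Rt 0) as [|hR] => //; exfalso.
have [N hN] := ach (1/4) ltac:(lra).
have [n0 hn0] := INR_unbounded (1/Rt).
have [b [k [c [hb [[hk1 hk2] [hd hc]]]]]] := hN (maxn N n0) (leq_maxl N n0).
set n := maxn N n0 in hk1 hk2.
pose z := (zrw + zwo)%nat.
pose a1 := symadv c (ival C 0 zrw) (ival C zrw z).
pose a2 := symadv c (ival C z (z+zrw)) (ival C (z+zrw) C).
have ad1 : admissible zrw zro zwo a1.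
  refine (conj _ (conj _ (conj _ (conj _ (conj _ (conj _ (conj _ _))))))).
  - exact: disj0r.
  - by apply: disj_ival.
  - exact: disj0l.
  - by rewrite /=; apply: leq_trans (card_ival _ _ _) _; lia.
  - by rewrite /= cards0.
  - by rewrite /=; apply: leq_trans (card_ival _ _ _) _; lia.
  - exact: (symadv_dist hd).
  - exact: symadv_causal.
have ad2 : admissible zrw zro zwo a2.
  refine (conj _ (conj _ (conj _ (conj _ (conj _ (conj _ (conj _ _))))))).
  - exact: disj0r.
  - by apply: disj_ival.
  - exact: disj0l.
  - by rewrite /=; apply: leq_trans (card_ival _ _ _) _; lia.
  - by rewrite /= cards0.
  - by rewrite /=; apply: leq_trans (card_ival _ _ _) _; rewrite /z; lia.
  - exact: (symadv_dist hd).
  - exact: symadv_causal.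
have h1 := hc a1 ad1; have h2 := hc a2 ad2.
have hs : 1 - / INR (expn 2 k) <= perr_ow c a1 + perr_ow c a2.
  apply: sym_sum => // i; rewrite !inE; have := ltn_ord i; rewrite /z.
  case: (i < zrw + zwo)%nat (leqP (zrw+zwo) i) => [] [] ? ? ; lia.
have hn : INR n0 <= INR n by apply: le_INR; apply/leP; apply: leq_maxr.
have hbb : 1 <= INR b by apply: (le_INR 1); apply/leP.
have e : 1 / Rt * Rt = 1 by field; lra.
have hnR : INR n * Rt > 1 by nra.
have hk : 0 < INR k.
  have : INR n * INR b * Rt >= INR n * Rt by have := pos_INR n; nra.
  lra.
have hk' : (0 < k)%nat by apply/ltP; apply: INR_lt; rewrite /=; lra.
have h2k : 2 <= INR (expn 2 k).
  apply: (le_INR 2); apply/leP; have := ltn_expl k (isT : (1 < 2)%nat); lia.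
have : / INR (expn 2 k) <= / 2 by apply: Rinv_le_contravar => //; lra.
lra.
Qed.

Section ConvA.
Variables (C n b k z zrw : nat) (hzC : (z <= C)%nat) (hzz : (zrw <= z)%nat).
Variable (c : code C n b k) (hA : is_dist (pA c)).

Definition adv0 : adversary C n b :=
  @Adversary C n b (ival C 0 zrw) set0 (ival C zrw z) unit (fun _ => 1)
     (fun _ _ _ _ => nseq_tuple b false).

Lemma rsh_proof (j : 'I_(C - z)) : (z + j < C)%nat.
Proof. have := ltn_ord j; lia. Qed.

Definition rsh (j : 'I_(C - z)) : 'I_C := Ordinal (rsh_proof j).

Definition proj (X : cword C n b) : {ffun 'I_(C - z) -> {ffun 'I_n -> b.-tuple bool}} :=
  [ffun j => X (rsh j)].

Lemma Zw_adv0 i : (i \in Zw adv0) = (i < z)%nat.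
Proof. rewrite /Zw /= !inE; lia. Qed.

Lemma proj_recv X1 X2 : proj X1 = proj X2 -> received_ow (a := adv0) tt X1 = received_ow (a := adv0) tt X2.
Proof.
move=> H; apply/ffunP => i; apply/ffunP => t; rewrite !ffunE Zw_adv0.
case: ltnP => hi //.
have hj : (i - z < C - z)%nat by have := ltn_ord i; lia.
move/ffunP: H => /(_ (Ordinal hj)); rewrite !ffunE.
have -> : rsh (Ordinal hj) = i by apply: val_inj => /=; lia.
by move=> ->.
Qed.

Definition okset (x : rA c) := [set m | dec c (received_ow (a := adv0) tt (enc c m x)) == m].

Lemma card_okset x : (#|okset x| <= expn 2 (b * n * (C - z)))%nat.
Proof.
have <- : #|{ffun 'I_(C - z) -> {ffun 'I_n -> b.-tuple bool}}| = expn 2 (b * n * (C - z)).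
  by rewrite !card_ffun !card_ord card_tuple card_bool -!expnM; f_equal; lia.
have : {in okset x &, injective (fun m => proj (enc c m x))}.
  move=> m1 m2; rewrite !inE => /eqP h1 /eqP h2 /proj_recv e.
  by rewrite -h1 -h2 e.
move/imset_injP/eqP <-; exact: max_card.
Qed.

Lemma perr_adv0 : 1 - INR (expn 2 (b * n * (C - z))) / INR (expn 2 k) <= perr_ow c adv0.
Proof.
case: hA => h0 h1.
have hM := INR2k_pos k.
have -> : perr_ow c adv0 = 1 - / INR (expn 2 k) * rsum (fun x => pA c x * INR #|okset x|).
  rewrite /perr_ow.
  rewrite (@rsum_ext _ _ (fun m => / INR (expn 2 k) * (rsum (pA c) + - rsum (fun x => pA c x * (if m \in okset x then 1 else 0))))).
    rewrite rsum_scal rsum_add rsum_opp h1 rsum_const card_tup.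
    rewrite (@rsum_ext _ _ (fun x => rsum (fun m => pA c x * (if m \in okset x then 1 else 0)))).
      rewrite rsum_exch; field; lra.
    by move=> x; rewrite rsum_scal (rsum_count (fun m => m \in okset x)).
  move=> m; congr (_ * _); rewrite -rsum_opp -rsum_add; apply: rsum_ext => x.
  rewrite (@rsum_ext _ _ (fun _ => 1 * (if m \in okset x then 0 else 1))).
    rewrite rsum_const card_unit /= inE; case: eqP => _; ring.
  by move=> [] /=; rewrite inE; case: eqP.
have : rsum (fun x => pA c x * INR #|okset x|) <= INR (expn 2 (b * n * (C - z))).
  rewrite -[X in _ <= X]Rmult_1_r -h1 -rsum_scal; apply: rsum_le => x.
  rewrite [X in _ <= X]Rmult_comm; apply: Rmult_le_compat_l => //; apply: le_INR; apply/leP; exact: card_okset.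
have : 0 < / INR (expn 2 k) by apply: Rinv_0_lt_compat.
rewrite /Rdiv; nra.
Qed.

End ConvA.

Lemma conv_a (C zrw zro zwo : nat) (Rt : R) :
  (zrw+zwo <= C)%nat -> achievable_ow C zrw zro zwo Rt -> Rt <= INR (C - (zrw+zwo))%nat.
Proof.
move=> hzC ach.
set z := (zrw + zwo)%nat in hzC *.
set d := INR (C - z)%nat.
destruct (Rle_lt_dec Rt d) as [|hR] => //; exfalso.
have [N hN] := ach (1/2) ltac:(lra).
have [n0 hn0] := INR_unbounded (2/(Rt - d)).
have [b [k [c [hb [[hk1 hk2] [hd hc]]]]]] := hN (maxn N n0) (leq_maxl N n0).
set n := maxn N n0 in hk1 hk2.
have hzz : (zrw <= z)%nat by rewrite /z; lia.
have ad : admissible zrw zro zwo (@adv0 C (maxn N n0) b z zrw).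
  refine (conj _ (conj _ (conj _ (conj _ (conj _ (conj _ (conj _ _))))))).
  - exact: disj0r.
  - by apply: disj_ival.
  - exact: disj0l.
  - by rewrite /=; apply: leq_trans (card_ival _ _ _) _; lia.
  - by rewrite /= cards0.
  - by rewrite /=; apply: leq_trans (card_ival _ _ _) _; rewrite /z; lia.
  - split; first by move=> t /=; lra.
    by rewrite rsum_const card_unit /=; ring.
  - by [].
have h1 := hc _ ad.
have h2 := @perr_adv0 C (maxn N n0) b k z zrw hzC hzz c hd.
have hn : INR n0 <= INR n by apply: le_INR; apply/leP; apply: leq_maxr.
have hbb : 1 <= INR b by apply: (le_INR 1); apply/leP.
have e : 2 / (Rt - d) * (Rt - d) = 2 by field; lra.
have hnR : INR n * (Rt - d) > 2 by nra.
have hd0 : 0 <= d by apply: pos_INR.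
have hkk : INR (muln (muln b n) (C - z))%nat + 1 < INR k.
  rewrite -!multE !mult_INR.
  have : INR n * INR b * (Rt - d) >= INR n * (Rt - d) by have := pos_INR n; nra.
  rewrite -/d; nra.
have hk' : (muln (muln b n) (C - z) + 1 < k)%nat.
  apply/ltP; apply: INR_lt; rewrite -plusE plus_INR /=; lra.
have h2k : 2 * INR (expn 2 (muln (muln b n) (C - z))) <= INR (expn 2 k).
  have -> : 2 = INR 2 by [].
  rewrite -mult_INR multE; apply: le_INR; apply/leP.
  rewrite -expnS leq_pexp2l //; lia.
have hM := INR2k_pos k.
have : INR (expn 2 (muln (muln b n) (C - z))) / INR (expn 2 k) <= 1/2.
  apply/(Rmult_le_reg_r (INR (expn 2 k))) => //.
  rewrite /Rdiv Rmult_assoc Rinv_l; lra.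
rewrite -/n in h1 h2; lra.
Qed.

Section Alg.
Import GRing.Theory.
Local Open Scope ring_scope.
Variable F : finFieldType.

Definition evalf m (y : {ffun 'I_m.+1 -> F}) (x : F) : F := \sum_(j < m.+1) y j * x ^+ j.

Lemma roots_le m (y1 y2 : {ffun 'I_m.+1 -> F}) (s : seq F) :
  uniq s -> (forall x, x \in s -> evalf y1 x = evalf y2 x) -> (m.+1 <= size s)%nat -> y1 = y2.
Proof.
move=> us hs hsz.
pose p := \poly_(i < m.+1) (y1 (inord i) - y2 (inord i)).
have hp x : p.[x] = evalf y1 x - evalf y2 x.
  rewrite horner_poly /evalf -sumrB; apply: eq_bigr => j _; rewrite inord_val mulrBl //.
have p0 : p = 0.
  apply/eqP; apply/negPn/negP => pn0.
  have : all (root p) s by apply/allP => x /hs e; rewrite /root hp e subrr.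
  move/(max_poly_roots pn0)/(_ us) => h.
  have := size_poly m.+1 (fun i => y1 (inord i) - y2 (inord i)).
  rewrite -/p => h2; have := leq_ltn_trans h2 (leq_ltn_trans hsz h); by rewrite ltnn.
apply/ffunP => j; apply/eqP; rewrite -subr_eq0.
have := congr1 (fun q : {poly F} => q`_j) p0.
by rewrite coef_poly ltn_ord inord_val coef0 => ->.
Qed.

Lemma collide_card m (y1 y2 : {ffun 'I_m.+1 -> F}) :
  y1 != y2 -> (#|[set x : F | evalf y1 x == evalf y2 x]| <= m)%nat.
Proof.
move=> ne; rewrite leqNgt; apply/negP => h; apply: (negP ne); apply/eqP.
apply: (@roots_le m y1 y2 (enum [set x : F | evalf y1 x == evalf y2 x])).
- exact: enum_uniq.
- by move=> x; rewrite mem_enum inE => /eqP.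
- by rewrite -cardE.
Qed.

Lemma mds C m (alpha : 'I_C -> F) (ainj : injective alpha) (v w : {ffun 'I_m.+1 -> F}) (S : {set 'I_C}) :
  (m.+1 <= #|S|)%nat -> (forall i, i \in S -> evalf v (alpha i) = evalf w (alpha i)) -> v = w.
Proof.
move=> hS h; apply: (@roots_le m v w [seq alpha i | i <- enum S]).
- by rewrite map_inj_uniq ?enum_uniq.
- by move=> x /mapP [i]; rewrite mem_enum => /h e ->.
- by rewrite size_map -cardE.
Qed.

End Alg.

Lemma inj_card (T U : finType) : (#|T| <= #|U|)%nat -> {f : T -> U | injective f}.
Proof.
move=> h; exists (fun t => enum_val (widen_ord h (enum_rank t))).
move=> x y /enum_val_inj /(congr1 val) /= /val_inj /enum_rank_inj; done.
Qed.

Lemma cancel_inj (T U : finType) (f : T -> U) (x0 : T) : injective f -> {g : U -> T | cancel f g}.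
Proof.
move=> fi; exists (fun y => odflt x0 [pick x | f x == y]) => t.
case: pickP => [x /eqP /fi -> //|/(_ t)]; by rewrite eqxx.
Qed.

Section Code.
Import GRing.Theory.
Local Open Scope ring_scope.
Variables (F : finFieldType) (C z d' n1' b k : nat).
Local Notation d := d'.+1.
Local Notation n1 := n1'.+1.
Local Notation n := (n1 + C.+1)%nat.
Variables (toS : F -> b.-tuple bool) (fromS : b.-tuple bool -> F) (toSK : cancel toS fromS).
Variables (alpha : 'I_C -> F) (ainj : injective alpha).
Variables (inj : k.-tuple bool -> {ffun 'I_n1 -> {ffun 'I_d -> F}}) (injI : injective inj).

Definition datF (u : {ffun 'I_n1 -> {ffun 'I_d -> F}}) (l : 'I_C) : {ffun 'I_n1 -> F} :=
  [ffun t => evalf (u t) (alpha l)].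

Definition encF (m : k.-tuple bool) (K : F) : cword C n b :=
  [ffun i => [ffun t => match fintype.split t with
    | inl t1 => toS (evalf (inj m t1) (alpha i))
    | inr j => if unlift ord0 j is Some l then toS (evalf (datF (inj m) l) K) else toS K
    end]].

Definition dY (Y : cword C n b) (l : 'I_C) : {ffun 'I_n1 -> F} :=
  [ffun t1 => fromS (Y l (lshift C.+1 t1))].
Definition keyY (Y : cword C n b) (j : 'I_C) : F := fromS (Y j (rshift n1 ord0)).
Definition hY (Y : cword C n b) (j l : 'I_C) : F := fromS (Y j (rshift n1 (lift ord0 l))).
Definition valid Y l j := evalf (dY Y l) (keyY Y j) == hY Y j l.
Definition acc Y := [set l | (z < #|[set j | valid Y l j]|)%nat].
Definition decF (Y : cword C n b) : k.-tuple bool :=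
  odflt (nseq_tuple k false) [pick m | [forall l, (l \in acc Y) ==> (datF (inj m) l == dY Y l)]].

Lemma enc_lo m K i (t1 : 'I_n1) : encF m K i (lshift C.+1 t1) = toS (evalf (inj m t1) (alpha i)).
Proof.
rewrite !ffunE; case: splitP => [t2 e|j e].
  by have -> : t2 = t1 by apply: val_inj; move: e => /=; lia.
by move: e => /=; have := ltn_ord t1; lia.
Qed.

Lemma enc_key m K i : encF m K i (rshift n1 ord0) = toS K.
Proof.
rewrite !ffunE; case: splitP => [t2 e|j e]; first by move: e => /=; have := ltn_ord t2; lia.
have -> : j = ord0 by apply: val_inj; move: e => /=; lia.
by rewrite unlift_none.
Qed.

Lemma enc_hash m K i l : encF m K i (rshift n1 (lift ord0 l)) = toS (evalf (datF (inj m) l) K).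
Proof.
rewrite !ffunE; case: splitP => [t2 e|j e]; first by move: e => /=; have := ltn_ord t2; lia.
have -> : j = lift ord0 l by apply: val_inj; move: e => /=; lia.
by rewrite liftK.
Qed.

Lemma enc_early m K K' i (s : 'I_n) : (s < n1)%nat -> encF m K i s = encF m K' i s.
Proof.
move=> hs; rewrite !ffunE; case: splitP => [t2 e|j e] //.
move: e hs => /=; lia.
Qed.


Lemma recvE (a : adversary C n b) (r : rC a) X l t :
  received_ow r X l t = if l \in Zw a then jam a r l t X else X l t.
Proof. by rewrite /received_ow !ffunE. Qed.

Lemma dYE Y l t1 : dY Y l t1 = fromS (Y l (lshift C.+1 t1)).
Proof. by rewrite /dY ffunE. Qed.

Lemma recv_honest (a : adversary C n b) (r : rC a) X l : l \notin Zw a -> received_ow r X l = X l.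
Proof. by move=> h; apply/ffunP => t; rewrite !ffunE (negbTE h). Qed.

Lemma dY_causal (a : adversary C n b) (r : rC a) m K K0 l : causal a ->
  dY (received_ow r (encF m K)) l = dY (received_ow r (encF m K0)) l.
Proof.
move=> ca; apply/ffunP => t1; rewrite !dYE !recvE; case: ifP => _.
  congr fromS; apply: ca => j s _ hs; apply: enc_early; move: hs => /=; have := ltn_ord t1; lia.
by congr fromS; apply: enc_early => /=; exact: ltn_ord.
Qed.

Variables (hd : (d + z = C)%nat) (hzd : (z < d)%nat).

Lemma decode_ok (a : adversary C n b) (r : rC a) m K : (#|Zw a| <= z)%nat ->
  (forall l, dY (received_ow r (encF m K)) l != datF (inj m) l ->
      evalf (dY (received_ow r (encF m K)) l) K != evalf (datF (inj m) l) K) ->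
  decF (received_ow r (encF m K)) = m.
Proof.
move=> hZ good.
set Y := received_ow r (encF m K).
have hH : (d <= #|~: Zw a|)%nat by have := cardsC (Zw a); rewrite card_ord; lia.
have honest_dY l : l \notin Zw a -> dY Y l = datF (inj m) l.
  move=> hl; apply/ffunP => t1; rewrite dYE /Y recv_honest // enc_lo toSK.
  by rewrite /datF ffunE.
have honest_valid l j : j \notin Zw a -> valid Y l j = (evalf (dY Y l) K == evalf (datF (inj m) l) K).
  move=> hj; rewrite /valid /keyY /hY /Y !recv_honest // enc_key enc_hash !toSK.
  done.
have accH l : l \notin Zw a -> l \in acc Y.
  move=> hl; rewrite inE; apply: leq_trans hzd (leq_trans hH _).
  apply: subset_leq_card; apply/subsetP => j; rewrite in_setC => hj; rewrite inE.
  by rewrite honest_valid // honest_dY.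
have accOK l : l \in acc Y -> dY Y l = datF (inj m) l.
  rewrite inE => hl; apply/eqP; apply/negPn/negP => ne.
  have : ([set j | valid Y l j] \subset Zw a).
    apply/subsetP => j; rewrite inE => hv; apply/negPn/negP => hj.
    by move: hv; rewrite honest_valid // (negbTE (good l ne)).
  move/subset_leq_card => h; have := leq_ltn_trans (leq_trans h hZ) hl; by rewrite ltnn.
rewrite /decF; case: pickP => [m' /forallP hm'|/(_ m)].
  apply: injI; apply/ffunP => t1.
  apply: (mds ainj (S := ~: Zw a)) => // l; rewrite inE => hl.
  have := hm' l; rewrite accH //= => /eqP e.
  have := congr1 (fun f : {ffun 'I_n1 -> F} => f t1) e.
  by rewrite honest_dY // /datF !ffunE.
move/negbT/negP; case; apply/forallP => l; apply/implyP => /accOK ->; exact: eqxx.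
Qed.

Local Open Scope R_scope.

Definition codeF : code C n b k := @Code C n b k F (fun _ => / INR #|F|) encF decF.

Definition ybad (a : adversary C n b) (r : rC a) m l := dY (received_ow r (encF m (@GRing.zero F))) l.
Definition Badl (a : adversary C n b) (r : rC a) m l (K : F) : bool :=
  (ybad r m l != datF (inj m) l) && (evalf (ybad r m l) K == evalf (datF (inj m) l) K).

Lemma err_le (a : adversary C n b) (r : rC a) m K : causal a -> (#|Zw a| <= z)%nat ->
  (if decF (received_ow r (encF m K)) == m then 0 else 1) <=
  rsum (fun l => if Badl r m l K then 1 else 0).
Proof.
move=> ca hZ.
case E: (decF _ == m); first by apply: rsum_ge0 => l; case: (Badl _ _ _ _); lra.
case: (boolP [exists l, Badl r m l K]) => [/existsP [l hl]|/existsP hno].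
  have := @rsum_term _ (fun l => if Badl r m l K then 1 else 0) l.
  rewrite hl; apply => l'; case: (Badl _ _ _ _); lra.
exfalso; move/negbT/negP: E; apply; apply/eqP; apply: decode_ok => // l.
rewrite /ybad (dY_causal r m K (@GRing.zero F) l ca) => ne; apply/negP => e.
by apply: hno; exists l; rewrite /Badl ne /=.
Qed.

Lemma count_bad (a : adversary C n b) (r : rC a) m l :
  rsum (fun K => if Badl r m l K then 1 else 0) <= INR n1'.
Proof.
rewrite (rsum_count (fun K => Badl r m l K)); apply: le_INR; apply/leP.
case: (boolP (ybad r m l != datF (inj m) l)) => ne.
  apply: leq_trans (collide_card ne); apply: subset_leq_card; apply/subsetP => K.
  by rewrite inE /Badl ne.
rewrite (_ : #|_| = 0%nat) //; apply: eq_card0 => K; by rewrite /Badl (negbTE ne).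
Qed.

Lemma perr_bound (a : adversary C n b) : causal a -> (#|Zw a| <= z)%nat -> is_dist (pC a) ->
  perr_ow codeF a <= INR C * INR n1' / INR #|F|.
Proof.
move=> ca hZ [hp0 hp1].
have hF : 0 < INR #|F| by apply: lt_0_INR; apply/ltP; apply/card_gt0P; exists (@GRing.zero F).
have hiF : 0 < / INR #|F| by apply: Rinv_0_lt_compat.
set beta := INR C * INR n1' / INR #|F|.
have hm : forall m, rsum (fun K : F => / INR #|F| * rsum (fun r => pC a r *
     (if decF (received_ow r (encF m K)) == m then 0 else 1))) <= beta.
  move=> m.
  apply: Rle_trans (_ : rsum (fun K : F => / INR #|F| * rsum (fun r => pC a r *
     rsum (fun l => if Badl r m l K then 1 else 0))) <= _).
    apply: rsum_le => K; apply: Rmult_le_compat_l; first lra.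
    apply: rsum_le => r; apply: Rmult_le_compat_l => //; exact: err_le.
  have -> : rsum (fun K : F => / INR #|F| * rsum (fun r => pC a r *
     rsum (fun l => if Badl r m l K then 1 else 0))) =
     rsum (fun r => pC a r * rsum (fun l => / INR #|F| * rsum (fun K => if Badl r m l K then 1 else 0))).
    rewrite (@rsum_ext _ _ (fun K => rsum (fun r => rsum (fun l => / INR #|F| * pC a r * (if Badl r m l K then 1 else 0))))).
      rewrite rsum_exch; apply: rsum_ext => r; rewrite rsum_exch -rsum_scal; apply: rsum_ext => l.
      rewrite -!rsum_scal; apply: rsum_ext => K; ring.
    move=> K; rewrite -rsum_scal; apply: rsum_ext => r; rewrite rsum_scal; ring.

  apply: Rle_trans (_ : rsum (fun r => pC a r * (INR C * (/ INR #|F| * INR n1'))) <= _).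
    apply: rsum_le => r; apply: Rmult_le_compat_l => //.
    have -> : INR C * (/ INR #|F| * INR n1') = rsum (fun l : 'I_C => / INR #|F| * INR n1').
      by rewrite rsum_const card_ord.
    apply: rsum_le => l; apply: Rmult_le_compat_l; first lra; exact: count_bad.
  rewrite (@rsum_ext _ _ (fun r => (INR C * (/ INR #|F| * INR n1')) * pC a r)); last by move=> r; ring.
  rewrite rsum_scal hp1 /beta; apply: Req_le; field; lra.
rewrite /perr_ow /=.
apply: Rle_trans (_ : rsum (fun m : k.-tuple bool => / INR (expn 2 k) * beta) <= _).
  apply: rsum_le => m; apply: Rmult_le_compat_l; last exact: hm.
  by apply: Rlt_le; apply: Rinv_0_lt_compat; apply: INR2k_pos.
rewrite rsum_const card_tup; apply: Req_le; have := INR2k_pos k; move=> ?; field; lra.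
Qed.

End Code.


Lemma floor_nat (x : R) : 0 <= x -> exists k : nat, INR k <= x < INR k + 1.
Proof.
move=> hx; have [h1 h2] := archimed x.
have hz : (0 < up x)%Z by apply: lt_IZR; lra.
have hz' : (0 <= up x - 1)%Z by lia.
exists (Z.to_nat (up x - 1)); rewrite INR_IZR_INZ Znat.Z2Nat.id // minus_IZR; lra.
Qed.

Lemma card_Zw (C n b zrw zro zwo : nat) (a : adversary C n b) :
  admissible zrw zro zwo a -> (#|Zw a| <= zrw + zwo)%nat.
Proof.
move=> [_ [_ [_ [h1 [_ [h3 _]]]]]]; rewrite /Zw.
have := cardsU (Zrw a) (Zwo a); lia.
Qed.

Lemma ach (C zrw zro zwo : nat) (Rt : R) : (2*zwo+2*zrw < C)%nat ->
  0 <= Rt < INR (C - (zrw+zwo))%nat -> achievable_ow C zrw zro zwo Rt.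
Proof.
move=> h2z [hR0 hR] eps heps.
set z := (zrw + zwo)%nat in hR.
have hzd : (z < C - z)%nat by rewrite /z; lia.
set dd := INR (C - z)%nat in hR.
have [L hL] := INR_unbounded (INR C / eps).
have [N0 hN0] := INR_unbounded (dd * INR C.+2 / (dd - Rt)).
exists (maxn C.+2 N0) => n hn.
have [n1' en] : exists n1', n = addn n1'.+1 C.+1 by exists (n - C.+2)%nat; move: hn; rewrite geq_max; lia.
subst n.
pose b := addn (addn n1'.+1 C.+1) L.
have hb : (0 < b)%nat by rewrite /b; lia.
have [k [hk1 hk2]] := floor_nat (x := INR (addn n1'.+1 C.+1) * INR b * Rt) ltac:(apply: Rmult_le_pos; [apply: Rmult_le_pos; apply: pos_INR | lra]).
have [F _ hF] := pPrimePowerField (p := 2) (k := b) (isT : prime 2) hb.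
have [toS toSI] : {f : F -> b.-tuple bool | injective f}.
  by apply: inj_card; rewrite hF card_tup.
have [fromS toSK] := cancel_inj (@GRing.zero F) toSI.
have [alpha ainj] : {f : 'I_C -> F | injective f}.
  apply: inj_card; rewrite hF card_ord.
  apply: leq_trans (ltnW (ltn_expl b (isT : (1 < 2)%nat))); rewrite /b; lia.
set d' := (C - z).-1.
have hd : (d'.+1 + z)%nat = C by rewrite /d'; lia.
have hzd' : (z < d'.+1)%nat by rewrite /d'; lia.
have hkle : (k <= b * d'.+1 * n1'.+1)%nat.
  have hdd : dd = INR d'.+1 by rewrite /dd; congr INR; rewrite /d'; lia.
  have hnn : INR N0 <= INR n1'.+1 + INR C.+1.
    rewrite -plus_INR; apply: le_INR; apply/leP; move: hn; rewrite geq_max; lia.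
  have hdR : 0 < dd - Rt by lra.
  have e1 : dd * INR C.+2 / (dd - Rt) * (dd - Rt) = dd * INR C.+2 by field; lra.
  have hC2 : INR C.+2 = INR C.+1 + 1 by rewrite S_INR.
  have hd0 : 0 <= dd by apply: pos_INR.
  have key : (INR n1'.+1 + INR C.+1) * Rt <= INR n1'.+1 * dd.
    have : (INR n1'.+1 + INR C.+1) * (dd - Rt) >= dd * INR C.+2 / (dd - Rt) * (dd - Rt).
      apply: Rle_ge; apply: Rmult_le_compat_r; lra.
    rewrite e1 hC2; nra.
  have := Rmult_le_compat_l (INR b) _ _ (pos_INR b) key.
  rewrite -plusE plus_INR in hk1.
  move=> h; apply/leP; apply: INR_le; rewrite -!multE !mult_INR -hdd; nra.
have [inj injI] : {f : k.-tuple bool -> {ffun 'I_n1'.+1 -> {ffun 'I_d'.+1 -> F}} | injective f}.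
  apply: inj_card; rewrite card_tup !card_ffun !card_ord hF -!expnM; apply: leq_pexp2l => //.
  by move: hkle; lia.
exists b, k, (codeF z toS fromS alpha inj); split => //; split; first by split.
split.
  split => [K|] /=; first by apply: Rlt_le; apply: Rinv_0_lt_compat; rewrite hF; apply: INR2k_pos.
  rewrite rsum_const hF; have := INR2k_pos b => ?; field; lra.
move=> a ad.
apply: Rle_lt_trans (perr_bound toSK ainj injI hd hzd' _ _ _) _.
- by case: ad => [_ [_ [_ [_ [_ [_ [_ ?]]]]]]].
- exact: card_Zw ad.
- by case: ad => [_ [_ [_ [_ [_ [_ [? _]]]]]]].
rewrite hF.
have hP := INR2k_pos b; have hQ := INR2k_pos L.
have hLQ : INR L <= INR (expn 2 L) by apply: le_INR; apply/leP; apply: ltnW; apply: ltn_expl.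
have hCe : INR C < eps * INR (expn 2 L).
  have e1 : INR C / eps * eps = INR C by field; lra.
  nra.
have hnat : (n1' * expn 2 L <= expn 2 b)%nat.
  rewrite /b expnD leq_mul2r; apply/orP; right.
  apply: leq_trans (ltnW (ltn_expl (addn n1'.+1 C.+1) (isT : (1 < 2)%nat))); lia.
have hnr : INR n1' * INR (expn 2 L) <= INR (expn 2 b).
  by rewrite -mult_INR; apply: le_INR; apply/leP; rewrite multE.
have hC0 := pos_INR C; have hn0 := pos_INR n1'.
have h1 : INR (expn 2 L) * (INR C * INR n1') <= INR C * INR (expn 2 b) by nra.
have h2 : INR C * INR (expn 2 b) < eps * INR (expn 2 L) * INR (expn 2 b) by nra.
apply: (Rmult_lt_reg_r (INR (expn 2 b))) => //.
have -> : INR C * INR n1' / INR (expn 2 b) * INR (expn 2 b) = INR C * INR n1' by field; lra.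
nra.
Qed.

Close Scope R_scope.
Theorem theorem2 (C zrw zro zwo : nat) (hz : (zrw + zro + zwo <= C)%N) :
  capacity_ow_is C zrw zro zwo
    (if (2 * zwo + 2 * zrw < C)%N then INR (C - (zrw + zwo)) else 0%R).
Proof.
Open Scope R_scope.
have hz' : (zrw + zwo <= C)%nat by apply: leq_trans hz; rewrite -addnA leq_add2l leq_addl.
case: ifP => h2; split.
- by move=> Rt /(conv_a hz').
- move=> u Hu.
  have pos : 0 < INR (C - (zrw + zwo))%nat.
    apply: lt_0_INR; apply/ltP; rewrite subn_gt0.
    lia.
  destruct (Rle_lt_dec (INR (C - (zrw + zwo))%nat) u) as [|hu] => //.
  have h0 : 0 <= u by apply: Hu; apply: ach0.
  have : (u + INR (C - (zrw + zwo))%nat)/2 <= u by apply: Hu; apply: ach => //; lra.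
  lra.
- by move=> Rt; apply: conv_b; rewrite leqNgt h2.
- by move=> u Hu; apply: Hu; apply: ach0.
Qed.
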